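(* If $\mathcal O\subseteq\mathbb F$ is regular, then there are finitely many $\approx_{\mathcal O}$-equivalence classes on $\mathbb F$, and each of these classes is a regular subset of $\mathbb F$.
   Context: Fix a type $\sigma$ (finite set of relation symbols with arities). $\mathrm{Inc}(\mathbf A)$ of a $\sigma$-structure $\mathbf A$ is the bipartite multigraph with parts $V(\mathbf A)$ and the blocks $(R,(x_1,\dots,x_r))$, $(x_1,\dots,x_r)\in R(\mathbf A)$, with one edge joining $x_i$ to the block for each $i$; $\mathbf A$ is a $\sigma$-forest if $\mathrm{Inc}(\mathbf A)$ has no cycles or parallel edges. $\mathbb F$ is the set of isomorphism classes of $\sigma$-forests, $\mathbb F_{\mathrm r}$ that of rooted $\sigma$-forests. $(\mathbf A,a)+(\mathbf B,b)$: disjoint union with $a,b$ identified as new root; $[(\mathbf A,a)]$ forgets the root. $\mathcal O\subseteq\mathbb F$ is regular if there are only finitely many distinct sets $\mathcal O-(\mathbf A,a)=\{(\mathbf B,b)\in\mathbb F_{\mathrm r}:[(\mathbf A,a)+(\mathbf B,b)]\in\mathcal O\}$. For unrooted forests, $\mathbf A+\mathbf B$ is disjoint union, $\mathcal O-\mathbf A=\{\mathbf B\in\mathbb F:\mathbf A+\mathbf B\in\mathcal O\}$, and $\mathbf A\approx_{\mathcal O}\mathbf A'$ iff $\mathcal O-\mathbf A=\mathcal O-\mathbf A'$. *)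

(* Defs.v *)
From HB Require Import structures.
From mathcomp Require Import all_boot.

Unset Strict Implicit.
Unset Printing Implicit Defensive.

Record sstruct (sig : finType) (ar : sig -> nat) := SStruct {
  svert : finType;
  srel : forall R : sig, {set (ar R).-tuple svert} }.
Arguments sstruct {sig} ar.
Arguments SStruct {sig ar} svert srel.
Arguments svert {sig ar} s.
Arguments srel {sig ar} s R.

(* Vertices of Inc(A): elements of V(A) (left) and blocks (R, t) (right). *)
Definition inc_vert {sig : finType} {ar : sig -> nat} (A : sstruct ar) : finType :=
  (svert A + {R : sig & (ar R).-tuple (svert A)})%type.

Definition inc_adj {sig : finType} {ar : sig -> nat} (A : sstruct ar)
  : rel (inc_vert A) :=
  fun u v =>
    match u, v with
    | inl x, inr (existT R t) => (t \in srel A R) && (x \in (t : seq _))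
    | inr (existT R t), inl x => (t \in srel A R) && (x \in (t : seq _))
    | _, _ => false
    end.

(* A is a sigma-forest: Inc(A) has no parallel edges (every tuple of a
   relation has pairwise distinct entries) and no cycles (no cycle of
   length >= 3 through distinct vertices of the underlying simple graph). *)
Definition is_forest {sig : finType} {ar : sig -> nat} (A : sstruct ar) : Prop :=
  (forall (R : sig) (t : (ar R).-tuple (svert A)), t \in srel A R -> uniq t) /\
  (forall c : seq (inc_vert A), ucycle (inc_adj A) c -> size c <= 2).

Definition iso {sig : finType} {ar : sig -> nat} (A B : sstruct ar) : Prop :=
  exists f : svert A -> svert B, bijective f /\
    forall (R : sig) (t : (ar R).-tuple (svert A)),
      (map_tuple f t \in srel B R) = (t \in srel A R).

Record rstruct (sig : finType) (ar : sig -> nat) := RStruct {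
  rbase : sstruct ar;
  rroot : svert rbase }.
Arguments rstruct {sig} ar.
Arguments RStruct {sig ar} rbase rroot.
Arguments rbase {sig ar} r.
Arguments rroot {sig ar} r.

Definition is_rforest {sig : finType} {ar : sig -> nat} (P : rstruct ar) : Prop :=
  is_forest (rbase P).

Definition dunion {sig : finType} {ar : sig -> nat} (A B : sstruct ar) : sstruct ar :=
  SStruct (svert A + svert B)%type
    (fun R => [set map_tuple inl t | t in srel A R]
              :|: [set map_tuple inr t | t in srel B R]).

(* Rooted sum (A,a) + (B,b): disjoint union with a and b identified; the
   vertex set is V(A) + (V(B) \ {b}), b being sent to a, which is the root. *)
Definition glue_map {sig : finType} {ar : sig -> nat} (P Q : rstruct ar)
  (y : svert (rbase Q)) : (svert (rbase P) + {y : svert (rbase Q) | y != rroot Q})%type :=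
  match insub y with Some y' => inr y' | None => inl (rroot P) end.

Definition rglue {sig : finType} {ar : sig -> nat} (P Q : rstruct ar) : rstruct ar :=
  RStruct
    (SStruct (svert (rbase P) + {y : svert (rbase Q) | y != rroot Q})%type
      (fun R => [set map_tuple inl t | t in srel (rbase P) R]
                :|: [set map_tuple (glue_map P Q) t | t in srel (rbase Q) R]))
    (inl (rroot P)).

(* O is a set of isomorphism classes of sigma-forests, represented as an
   isomorphism-invariant predicate on structures that holds only on forests. *)
Definition forest_class {sig : finType} {ar : sig -> nat} (O : sstruct ar -> Prop) : Prop :=
  (forall A, O A -> is_forest A) /\ (forall A B, iso A B -> O A -> O B).

Definition rminus {sig : finType} {ar : sig -> nat} (O : sstruct ar -> Prop)
  (P : rstruct ar) : rstruct ar -> Prop :=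
  fun Q => is_rforest Q /\ O (rbase (rglue P Q)).

Definition regular {sig : finType} {ar : sig -> nat} (O : sstruct ar -> Prop) : Prop :=
  exists (n : nat) (S : 'I_n -> rstruct ar -> Prop),
    forall P : rstruct ar, is_rforest P ->
      exists i : 'I_n, forall Q : rstruct ar, rminus O P Q <-> S i Q.

Definition uminus {sig : finType} {ar : sig -> nat} (O : sstruct ar -> Prop)
  (A : sstruct ar) : sstruct ar -> Prop :=
  fun B => is_forest B /\ O (dunion A B).

Definition equivO {sig : finType} {ar : sig -> nat} (O : sstruct ar -> Prop)
  (A A' : sstruct ar) : Prop :=
  forall B : sstruct ar, uminus O A B <-> uminus O A' B.

(* Main.v *)
Require Import Defs.
From HB Require Import structures.
From mathcomp Require Import all_boot.
From Stdlib Require Import Classical ClassicalEpsilon.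

Lemma path_map_in (T U : Type) (e : rel T) (e' : rel U) (D : pred T) (h : T -> U) x s :
  (forall u v, D u -> D v -> e u v -> e' (h u) (h v)) ->
  all D (x :: s) -> path e x s -> path e' (h x) (map h s).
Proof.
move=> H; elim: s x => [|y s IH] x //= /and3P[Dx Dy Ds] /andP[exy p].
by rewrite H //= IH //= Dy Ds.
Qed.

Lemma ucycle_map (T U : eqType) (e : rel T) (e' : rel U) (D : pred T) (h : T -> U) c :
  (forall u v, D u -> D v -> e u v -> e' (h u) (h v)) ->
  (forall u v, D u -> D v -> h u = h v -> u = v) ->
  all D c -> ucycle e c -> ucycle e' (map h c).
Proof.
move=> He Hi Dc /andP[cc uc]; apply/andP; split.
  case: c Dc cc {uc} => [|x s] //= /andP[Dx Ds]; rewrite -map_rcons.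
  by apply: path_map_in He _ => /=; rewrite Dx all_rcons Dx Ds.
rewrite (map_inj_in_uniq (f:=h)) // => u v /(allP Dc) Du /(allP Dc) Dv; exact: Hi.
Qed.

Definition oadj {T : Type} (e : rel T) : rel (option T) :=
  fun a b => match a, b with Some a, Some b => e a b | _, _ => false end.

Lemma path_some (T : Type) (e : rel T) x s :
  path (oadj e) (Some x) (map Some s) = path e x s.
Proof. by elim: s x => [|y s IH] x //=; rewrite IH. Qed.

Lemma ucycle_oadj (T : eqType) (e : rel T) :
  (forall c, ucycle e c -> size c <= 2) ->
  forall c, ucycle (oadj e) c -> size c <= 2.
Proof.
move=> H c uc.
have allS : forall x, x \in c -> x != None.
  move=> x xc; have := next_cycle (andP uc).1 xc; by case: x {xc}.
have E : c = map Some (pmap id c).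
  elim: c allS {uc} => [|x s IH] //= A.
  case: x A => [x|] A; last by have := A None (mem_head _ _).
  by rewrite /= -IH // => y ys; apply: A; rewrite inE ys orbT.
move: uc; rewrite E size_map; move: (pmap id c) => d uc; apply: H; move: uc.
case: d => [|x s] //=.
have si : injective (@Some T) by move=> a b [].
by rewrite /ucycle /= -map_rcons path_some (mem_map si) (map_inj_uniq si).
Qed.

Section Emb.
Context {sig : finType} {ar : sig -> nat}.

Definition hemb {Y X : sstruct ar} (g : svert Y -> svert X) (u : inc_vert X) : option (inc_vert Y) :=
  match u with
  | inl x => omap inl [pick y | g y == x]
  | inr (existT R t) => omap (fun s => inr (existT (fun R => (ar R).-tuple (svert Y)) R s))
       [pick s : (ar R).-tuple (svert Y) | (s \in srel Y R) && (map_tuple g s == t)]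
  end.

Definition eback {Y X : sstruct ar} (g : svert Y -> svert X) (w : inc_vert Y) : inc_vert X :=
  match w with
  | inl y => inl (g y)
  | inr (existT R s) => inr (existT (fun R => (ar R).-tuple (svert X)) R (map_tuple g s))
  end.

Lemma hemb_back {Y X : sstruct ar} {g : svert Y -> svert X} {u w} :
  hemb g u = Some w -> u = eback g w.
Proof.
case: u => [x|[R t]] /=.
  by case: pickP => // y /eqP <- [<-].
by case: pickP => // s /andP[_ /eqP <-] [<-].
Qed.

Lemma hemb_inj {Y X : sstruct ar} (g : svert Y -> svert X) u v :
  hemb g u != None -> hemb g v != None -> hemb g u = hemb g v -> u = v.
Proof.
case E: (hemb g u) => [w|] // _ _ E2.
by rewrite (hemb_back E) (hemb_back (esym E2)).
Qed.

Lemma hemb_adj {Y X : sstruct ar} (g : svert Y -> svert X) : injective g ->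
  forall u v, hemb g u != None -> hemb g v != None -> inc_adj X u v ->
  oadj (inc_adj Y) (hemb g u) (hemb g v).
Proof.
move=> ig [x|[R t]] [x'|[R' t']] //=.
- case: pickP => // y /eqP gy _; case: pickP => // s /andP[sY /eqP gs] _ /= /andP[_].
  by rewrite -gy -gs /= (mem_map ig) sY.
- case: pickP => // s /andP[sY /eqP gs] _; case: pickP => // y /eqP gy _ /= /andP[_].
  by rewrite -gy -gs /= (mem_map ig) sY.
Qed.

Lemma forest_gen (X Y1 Y2 : sstruct ar) (g1 : svert Y1 -> svert X) (g2 : svert Y2 -> svert X)
  (zo : option (inc_vert X)) (side : inc_vert X -> bool) :
  injective g1 -> injective g2 -> is_forest Y1 -> is_forest Y2 ->
  (forall u v, inc_adj X u v -> Some u != zo -> Some v != zo -> side u = side v) ->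
  (forall u v, inc_adj X u v -> (Some u == zo) || side u -> hemb g1 u != None) ->
  (forall u v, inc_adj X u v -> (Some u == zo) || ~~ side u -> hemb g2 u != None) ->
  forall c, ucycle (inc_adj X) c -> size c <= 2.
Proof.
move=> i1 i2 [_ F1] [_ F2] hS c1 c2 c uc; rewrite leqNgt; apply/negP => c3.
have hasE : forall u, u \in c -> inc_adj X u (next c u) by move=> u; apply: next_cycle (andP uc).1.
have sp : forall y s, path (inc_adj X) y s -> (forall w, w \in y :: s -> Some w != zo) ->
    forall w, w \in s -> side w = side y.
  move=> y s; elim: s y => [|z s IH] y //= /andP[eyz p] nz w.
  have szy : side z = side y.
    by rewrite (hS y z) // nz // ?mem_head // inE mem_head orbT.
  rewrite inE => /orP[/eqP -> //|ws]; rewrite -szy; apply: IH => // w' w's; apply: nz.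
  by rewrite inE w's orbT.
have [b Hb] : exists b, forall u, u \in c -> (Some u == zo) || (side u == b).
  case Ez: zo => [z|]; last first.
    case: c uc c3 hasE => [|x s] // /andP[cc _] _ _; exists (side x) => u.
    rewrite /= rcons_path in cc; case/andP: cc => p _.
    rewrite inE => /orP[/eqP ->|us]; first by rewrite eqxx orbT.
    by rewrite (sp x s p) ?eqxx ?orbT // => w _; rewrite Ez.
  case zc : (z \in c); last first.
    case: c uc c3 hasE zc => [|x s] // /andP[cc _] _ _ zc; exists (side x) => u.
    rewrite /= rcons_path in cc; case/andP: cc => p _.
    have nz : forall w, w \in x :: s -> Some w != Some z.
      by move=> w ws; apply/negP => /eqP [wz]; move: zc; rewrite -wz ws.
    rewrite inE => /orP[/eqP ->|us]; first by rewrite eqxx orbT.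
    by rewrite (sp x s p) ?eqxx ?orbT // => w ws; rewrite Ez; apply: nz.
  case: (rot_to zc) => i s E.
  have ur : ucycle (inc_adj X) (z :: s) by rewrite -E rot_ucycle.
  have sz : size (z :: s) > 2 by rewrite -E size_rot.
  case: s E ur sz => [|y s] // E /andP[cc un] _.
  rewrite /= rcons_path /= in cc; case/and3P: cc => _ p _.
  exists (side y) => u; rewrite -(mem_rot i) E inE => /orP[/eqP ->|]; first by rewrite eqxx.
  have nz : forall w, w \in y :: s -> Some w != Some z.
    by move=> w ws; apply/negP => /eqP [wz]; move: un; rewrite /= -wz ws.
  rewrite inE => /orP[/eqP ->|us]; first by rewrite eqxx orbT.
  by rewrite (sp y s p) ?eqxx ?orbT // => w ws; rewrite Ez; apply: nz.
have main : forall (Y : sstruct ar) (g : svert Y -> svert X), injective g ->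
    (forall c, ucycle (inc_adj Y) c -> size c <= 2) ->
    (forall u, u \in c -> hemb g u != None) -> False.
  move=> Y g ig FY hc.
  have := @ucycle_oadj _ _ FY _ (@ucycle_map _ _ _ _ (fun u => hemb g u != None) (hemb g) c (hemb_adj g ig) (hemb_inj g) (introT allP hc) uc).
  by rewrite size_map leqNgt c3.
case: b Hb => Hb.
  apply: (main _ g1 i1 F1) => u uc'; apply: (c1 u (next c u)); first exact: hasE.
  by have := Hb u uc'; case: (Some u == zo) => //= /eqP ->.
apply: (main _ g2 i2 F2) => u uc'; apply: (c2 u (next c u)); first exact: hasE.
by have := Hb u uc'; case: (Some u == zo) => //= /eqP ->.
Qed.

End Emb.

Section Iso.
Context {sig : finType} {ar : sig -> nat}.

Lemma mapT_comp (T0 T1 T2 : Type) k (f : T1 -> T2) (g : T0 -> T1) (t : k.-tuple T0) :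
  map_tuple f (map_tuple g t) = map_tuple (f \o g) t.
Proof. by apply: val_inj; rewrite /= map_comp. Qed.

Lemma mapT_eq (T0 T1 : Type) k (f g : T0 -> T1) (t : k.-tuple T0) :
  f =1 g -> map_tuple f t = map_tuple g t.
Proof. by move=> fg; apply: val_inj; rewrite /=; apply: eq_map. Qed.

Lemma mapT_inj (T0 T1 : eqType) k (f : T0 -> T1) : injective f ->
  injective (fun t : k.-tuple T0 => map_tuple f t).
Proof. by move=> fi t1 t2 /(congr1 val) /= /(inj_map fi) /val_inj. Qed.

Lemma imsetT_comp (T0 T1 T2 : finType) k (f : T1 -> T2) (g : T0 -> T1) (h : T0 -> T2)
  (A : {set k.-tuple T0}) : f \o g =1 h ->
  [set map_tuple f t | t in [set map_tuple g s | s in A]] = [set map_tuple h s | s in A].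
Proof.
move=> fg; rewrite -imset_comp; apply: eq_imset => s /=.
by rewrite mapT_comp; apply: mapT_eq.
Qed.

Lemma imsetT_id (T0 : finType) k (f : T0 -> T0) (A : {set k.-tuple T0}) : f =1 id ->
  [set map_tuple f t | t in A] = A.
Proof.
move=> fid; rewrite -[RHS]imset_id; apply: eq_imset => s /=.
by apply: val_inj; rewrite /= (eq_map fid) map_id.
Qed.

Lemma iso_of (X Y : sstruct ar) (f : svert X -> svert Y) : bijective f ->
  (forall R, [set map_tuple f t | t in srel X R] = srel Y R) -> iso X Y.
Proof.
move=> bf H; exists f; split => // R t.
by rewrite -H mem_imset //; apply: mapT_inj; apply: bij_inj.
Qed.

Lemma iso_img (X Y : sstruct ar) : iso X Y -> exists f : svert X -> svert Y, bijective f /\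
  (forall R, [set map_tuple f t | t in srel X R] = srel Y R).
Proof.
move=> [f [bf H]]; exists f; split => // R; case: (bf) => g fg gf.
apply/setP => t'; apply/imsetP/idP => [[t tX ->]|t'Y]; first by rewrite H.
have e : map_tuple f (map_tuple g t') = t'.
  by apply: val_inj; rewrite /= -map_comp (eq_map gf) map_id.
by exists (map_tuple g t'); rewrite ?e // -H e.
Qed.

Lemma iso_sym (X Y : sstruct ar) : iso X Y -> iso Y X.
Proof.
move=> /iso_img [f [bf H]]; case: (bf) => g fg gf.
apply: (@iso_of _ _ g); first by exists f.
move=> R; rewrite -H (@imsetT_comp _ _ _ _ g f id); last exact: fg.
by apply: imsetT_id.
Qed.

End Iso.

Section Structs.
Context {sig : finType} {ar : sig -> nat}.

Lemma imsetTT (T0 T1 T2 : finType) k (f : T1 -> T2) (g : T0 -> T1) (A : {set k.-tuple T0}) :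
  [set map_tuple f t | t in [set map_tuple g s | s in A]] = [set map_tuple (f \o g) s | s in A].
Proof. exact: imsetT_comp. Qed.

Lemma imsetT_eqf (T0 T1 : finType) k (f g : T0 -> T1) (A : {set k.-tuple T0}) :
  f =1 g -> [set map_tuple f t | t in A] = [set map_tuple g t | t in A].
Proof. by move=> fg; apply: eq_imset => t; apply: mapT_eq. Qed.

Definition ptS : sstruct ar := SStruct unit (fun R => set0).
Definition addpt (B : sstruct ar) : rstruct ar := RStruct (dunion B ptS) (inr tt).

Lemma forest_norel (X : sstruct ar) : (forall R, srel X R = set0) -> is_forest X.
Proof.
move=> H; have nE : forall u v, inc_adj X u v = false.
  by move=> [x|[R t]] [y|[R' t']] //=; rewrite H inE.
split=> [R t|[|x s]] //; first by rewrite H inE.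
by case: s => [|y s] /andP[] //=; rewrite ?nE //= nE.
Qed.

Lemma forest_pt : is_forest ptS.
Proof. by apply: forest_norel. Qed.

End Structs.

Definition isl {A B : Type} (x : A + B) : bool := if x is inl _ then true else false.

Section Forests.
Context {sig : finType} {ar : sig -> nat}.

Lemma hemb_vert (Y X : sstruct ar) (g : svert Y -> svert X) x :
  (hemb g (inl x) != None) = [exists y, g y == x].
Proof.
rewrite /=; case: pickP => [y gy|H] /=.
  by symmetry; apply/existsP; exists y.
by symmetry; apply/existsP => -[y]; rewrite H.
Qed.

Lemma hemb_blk (Y X : sstruct ar) (g : svert Y -> svert X) R t :
  (hemb g (inr (existT _ R t)) != None) = [exists s, (s \in srel Y R) && (map_tuple g s == t)].
Proof.
rewrite /=; case: pickP => [s Hs|H] /=.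
  by symmetry; apply/existsP; exists s.
by symmetry; apply/existsP => -[s]; rewrite H.
Qed.

Lemma mem_mapT (T U : eqType) k (f : T -> U) (s : k.-tuple T) x :
  x \in (map_tuple f s : seq U) -> exists y, x = f y.
Proof. by move=> /mapP[y _ ->]; exists y. Qed.

Lemma forest_dunion (A B : sstruct ar) : is_forest A -> is_forest B -> is_forest (dunion A B).
Proof.
move=> FA FB; split.
  move=> R t /setUP[] /imsetP[s sA ->]; rewrite /= map_inj_uniq ?(FA.1 R s) ?(FB.1 R s) //.
  - by move=> a b [].
  - by move=> a b [].
pose side (u : inc_vert (dunion A B)) := hemb (Y := A) (X := dunion A B) inl u != None.
have sv : forall x, side (inl x) = isl x.
  move=> x; rewrite /side hemb_vert; case: x => [a|b] /=.
    by apply/existsP; exists a.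
  by apply/existsP => -[a].
have sb : forall R t x, t \in srel (dunion A B) R -> x \in (t : seq _) ->
    side (inr (existT _ R t)) = isl x.
  move=> R t x tX xt; rewrite /side hemb_blk; apply/existsP/idP.
    by move=> [s /andP[_ /eqP E]]; move: xt; rewrite -E => /mem_mapT[a ->].
  case: x xt => [a|b] // xt _; move: tX => /setUP[] /imsetP[s sX E].
    by exists s; rewrite sX E eqxx.
  by move: xt; rewrite E => /mem_mapT[? []].
apply: (@forest_gen _ _ (dunion A B) A B inl inr None side).
- by move=> a b [].
- by move=> a b [].
- exact: FA.
- exact: FB.
- move=> [x|[R t]] [y|[R' t']] //= /andP[tX xt] _ _.
    by rewrite sv (sb _ _ _ tX xt).
  by rewrite sv (sb _ _ _ tX xt).
- by move=> u v _.
- move=> [x|[R t]] [y|[R' t']] //= /andP[tX xt] /=.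
  + rewrite sv; case: x xt => [a|b] //= _ _; rewrite hemb_vert; by apply/existsP; exists b.
  + rewrite (sb _ _ _ tX xt) => H.
    change (hemb (X:=dunion A B) inr (inr (existT _ R t)) != None); rewrite hemb_blk.
    move: tX => /setUP[] /imsetP[s sX E].
      by move: xt H; rewrite E => /mem_mapT[a ->].
    by apply/existsP; exists s; rewrite sX E eqxx.
Qed.

End Forests.

Section Glue.
Context {sig : finType} {ar : sig -> nat}.

Lemma glue_root (P Q : rstruct ar) : glue_map P Q (rroot Q) = inl (rroot P).
Proof. by rewrite /glue_map insubF // eqxx. Qed.

Lemma glue_val (P Q : rstruct ar) y : glue_map P Q (val y) = inr y.
Proof. by rewrite /glue_map valK. Qed.

Lemma glue_inl (P Q : rstruct ar) y a : glue_map P Q y = inl a -> a = rroot P /\ y = rroot Q.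
Proof.
rewrite /glue_map; case: insubP => [y' _ _ //|/negPn/eqP -> [<-]]; by split.
Qed.

Lemma glue_inj (P Q : rstruct ar) : injective (glue_map P Q).
Proof.
move=> y1 y2; rewrite /glue_map.
case: insubP => [y1' _ e1|/negPn/eqP e1]; case: insubP => [y2' _ e2|/negPn/eqP e2] //.
  by move=> [e]; rewrite -e1 -e2 e.
by rewrite e1 e2.
Qed.

Lemma forest_glue (P Q : rstruct ar) : is_rforest P -> is_rforest Q -> is_forest (rbase (rglue P Q)).
Proof.
move=> FA FB; set X := rbase (rglue P Q); split.
  move=> R t /setUP[] /imsetP[s sA ->]; rewrite /= map_inj_uniq ?(FA.1 R s) ?(FB.1 R s) //.
  - by move=> a b [].
  - exact: glue_inj.
pose side (u : inc_vert X) := hemb (Y := rbase P) (X := X) inl u != None.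
pose z : inc_vert X := inl (inl (rroot P)).
have sv : forall x, side (inl x) = isl x.
  move=> x; rewrite /side hemb_vert; case: x => [a|b] /=.
    by apply/existsP; exists a.
  by apply/existsP => -[a].
have sb : forall R t x, t \in srel X R -> x \in (t : seq _) -> x != inl (rroot P) ->
    side (inr (existT _ R t)) = isl x.
  move=> R t x tX xt xz; rewrite /side hemb_blk; apply/existsP/idP.
    by move=> [s /andP[_ /eqP E]]; move: xt; rewrite -E => /mem_mapT[a ->].
  case: x xt xz => [a|b] // xt xz _; move: tX => /setUP[] /imsetP[s sX E].
    by exists s; rewrite sX E eqxx.
  move: xt; rewrite E => /mem_mapT[y /esym /glue_inl[ea _]].
  by move: xz; rewrite ea eqxx.
apply: (@forest_gen _ _ X (rbase P) (rbase Q) inl (glue_map P Q) (Some z) side).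
- by move=> a b [].
- exact: glue_inj.
- exact: FA.
- exact: FB.
- move=> [x|[R t]] [y|[R' t']] //= /andP[tX xt] n1 n2.
    rewrite sv (sb _ _ _ tX xt) //; apply: contra n1 => /eqP ->; by [].
  rewrite sv (sb _ _ _ tX xt) //; apply: contra n2 => /eqP ->; by [].
- move=> [x|[R t]] v _; last by case/orP => // /eqP.
  case/orP => [/eqP [->]|//]; rewrite hemb_vert; by apply/existsP; exists (rroot P).
- move=> [x|[R t]] [y|[R' t']] // /andP[tX xt].
  + change (hemb (X:=X) (glue_map P Q) (inl x) != None) with (hemb (X:=X) (glue_map P Q) (inl x) != None).
    rewrite hemb_vert; case/orP => [/eqP [->]|].
      by apply/existsP; exists (rroot Q); rewrite glue_root.
    rewrite sv; case: x xt => [a|b] //= _ _; by apply/existsP; exists (val b); rewrite glue_val.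
  + case/orP => [/eqP //|].
    case Ey : (y == inl (rroot P)).
      (* block adjacent to the cut vertex; side may be anything *)
      move=> H; change (hemb (X:=X) (glue_map P Q) (inr (existT _ R t)) != None); rewrite hemb_blk.
      move: tX => /setUP[] /imsetP[s sX E]; last by apply/existsP; exists s; rewrite sX E eqxx.
      move: H; rewrite /side; change (hemb (X:=X) inl (inr (existT _ R t)) != None) with (side (inr (existT _ R t))).
      by rewrite /side hemb_blk; move/existsP => []; exists s; rewrite sX E eqxx.
    rewrite (sb _ _ _ tX xt) ?Ey // => H.
    change (hemb (X:=X) (glue_map P Q) (inr (existT _ R t)) != None); rewrite hemb_blk.
    move: tX => /setUP[] /imsetP[s sX E].
      by move: xt H; rewrite E => /mem_mapT[a ->].
    by apply/existsP; exists s; rewrite sX E eqxx.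
Qed.

End Glue.

Section IsoLemmas.
Context {sig : finType} {ar : sig -> nat}.

Lemma iso_dunionl (A A' B : sstruct ar) : iso A A' -> iso (dunion A B) (dunion A' B).
Proof.
move=> /iso_img [f [bf H]]; case: (bf) => g fg gf.
pose F (v : svert (dunion A B)) : svert (dunion A' B) :=
  match v with inl a => inl (f a) | inr b => inr b end.
apply: (@iso_of _ _ _ _ F).
  exists (fun v : svert (dunion A' B) => match v with inl a => inl (g a) | inr b => inr b end : svert (dunion A B)).
    by case => [a|b] //=; rewrite fg.
  by case => [a|b] //=; rewrite gf.
move=> R; rewrite /= imsetU !imsetTT -H imsetTT.
by congr (_ :|: _); apply: imsetT_eqf.
Qed.

Lemma tup_empty (T : Type) k (u v : k.-tuple T) : (T -> False) -> u = v.
Proof.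
move=> H; have e : forall w : k.-tuple T, val w = [::].
  by case => [[|x s] _] //; case: (H x).
by apply: val_inj; rewrite !e.
Qed.

Definition nullset (A : sstruct ar) : {set sig} :=
  [set R | [exists t : (ar R).-tuple (svert A), t \in srel A R]].

Lemma iso_empty (A A' : sstruct ar) : (svert A -> False) -> (svert A' -> False) ->
  nullset A = nullset A' -> iso A A'.
Proof.
move=> nA nA' N.
pose f (x : svert A) : svert A' := match nA x with end.
apply: (@iso_of _ _ _ _ f).
  by exists (fun y : svert A' => match nA' y with end) => [x|y]; [case: (nA x)|case: (nA' y)].
move=> R; apply/setP => t'; have := congr1 (fun S : {set sig} => R \in S) N.
rewrite !inE => E; apply/imsetP/idP => [[t tA ->]|tA'].
  have : [exists t, t \in srel A R] by apply/existsP; exists t.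
  by rewrite E => /existsP[t'' ]; rewrite (tup_empty _ _ (map_tuple f t) t'' nA').
have : [exists t, t \in srel A' R] by apply/existsP; exists t'.
rewrite -E => /existsP[t tA]; exists t => //; exact: (tup_empty _ _ _ _ nA').
Qed.

Lemma iso_glue_pt (A B : sstruct ar) (a : svert A) :
  iso (rbase (rglue (RStruct A a) (addpt B))) (dunion A B).
Proof.
set X := rbase _.
have nt : forall b : svert B, (inl b : svert (dunion B ptS)) != inr tt by [].
pose F (v : svert X) : svert (dunion A B) :=
  match v with inl x => inl x | inr y => match val y with inl b => inr b | inr _ => inl a end end.
pose G (v : svert (dunion A B)) : svert X :=
  match v with inl x => inl x | inr b => inr (Sub (inl b) (nt b)) end.
apply: (@iso_of _ _ _ _ F).
  exists G; last by case.
  case => [x|[[b|[]] p]] //=; first by congr inr; apply: val_inj.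
move=> R; rewrite /= imsetU imsetTT imsetU !imsetTT imset0 setU0.
rewrite imsetTT; congr (_ :|: _); apply: imsetT_eqf => b //=.
by rewrite /glue_map; case: insubP => [y _ e|] //=; rewrite e.
Qed.

Lemma iso_glue_dunion (P Q : rstruct ar) (B : sstruct ar) :
  iso (dunion (rbase (rglue P Q)) B)
      (rbase (rglue (RStruct (dunion (rbase P) B) (inl (rroot P))) Q)).
Proof.
set X := dunion _ _; set Y := rbase _.
pose F (v : svert X) : svert Y :=
  match v with inl (inl x) => inl (inl x) | inl (inr y) => inr y | inr b => inl (inr b) end.
pose G (v : svert Y) : svert X :=
  match v with inl (inl x) => inl (inl x) | inr y => inl (inr y) | inl (inr b) => inr b end.
apply: (@iso_of _ _ _ _ F).
  by exists G; [case => [[x|y]|b] | case => [[x|b]|y]].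
move=> R; rewrite /= !imsetU !imsetTT -setUA [X in _ :|: X]setUC setUA.
congr (_ :|: _ :|: _); try (apply: imsetT_eqf => x /=; by []).
apply: imsetT_eqf => y /=; rewrite /glue_map /=.
by case: insubP.
Qed.

End IsoLemmas.

Definition pb (P : Prop) : bool := if excluded_middle_informative P then true else false.
Lemma pbP (P : Prop) : pb P <-> P.
Proof. by rewrite /pb; case: excluded_middle_informative. Qed.

Section Main.
Context {sig : finType} {ar : sig -> nat}.

Lemma Oiso {O : sstruct ar -> Prop} : forest_class O -> forall X Y, iso X Y -> (O X <-> O Y).
Proof. by move=> [_ FC] X Y I; split; apply: FC => //; apply: iso_sym. Qed.

Lemma equiv_iso {O : sstruct ar -> Prop} A A' : forest_class O -> iso A A' -> equivO O A A'.
Proof.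
move=> FC I B; rewrite /uminus; have := Oiso FC _ _ (iso_dunionl _ _ B I); tauto.
Qed.

Lemma uminus_rminus {O : sstruct ar -> Prop} (A B : sstruct ar) (a : svert A) :
  forest_class O -> is_forest B ->
  (O (dunion A B) <-> rminus O (RStruct A a) (addpt B)).
Proof.
move=> FC FB; rewrite /rminus; have F : is_rforest (addpt B) by apply: (forest_dunion _ _ FB forest_pt).
have := Oiso FC _ _ (iso_glue_pt A B a); tauto.
Qed.

Lemma key_vertex {O : sstruct ar -> Prop} (A A' : sstruct ar) (a : svert A) (a' : svert A') :
  forest_class O ->
  (forall Q, rminus O (RStruct A a) Q <-> rminus O (RStruct A' a') Q) -> equivO O A A'.
Proof.
move=> FC H B; rewrite /uminus; split=> -[FB OB]; split => //.
  by apply/(uminus_rminus _ _ a' FC FB)/H/(uminus_rminus _ _ a FC FB).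
by apply/(uminus_rminus _ _ a FC FB)/H/(uminus_rminus _ _ a' FC FB).
Qed.

End Main.

Theorem lemma4p4 (sig : finType) (ar : sig -> nat) (O : sstruct ar -> Prop) :
  forest_class O -> regular O ->
  (exists (n : nat) (C : 'I_n -> sstruct ar),
      (forall i, is_forest (C i)) /\
      forall A, is_forest A -> exists i, equivO O A (C i)) /\
  (forall A, is_forest A -> regular (fun A' => is_forest A' /\ equivO O A' A)).
Proof.
move=> FC [n [S HS]]; split.
  pose good (k : ('I_n + {set sig})%type) (A : sstruct ar) : Prop :=
    is_forest A /\ match k with
                   | inl i => exists a, forall Q, rminus O (RStruct A a) Q <-> S i Q
                   | inr N => (svert A -> False) /\ nullset A = N end.
  pose Cf k := epsilon (inhabits (@ptS _ ar))
                 (fun A => is_forest A /\ ((exists A', good k A') -> good k A)).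
  have Cf_spec : forall k, is_forest (Cf k) /\ ((exists A', good k A') -> good k (Cf k)).
    move=> k; apply: (@epsilon_spec _ _ (fun A => is_forest A /\ ((exists A', good k A') -> good k A))).
    case: (classic (exists A', good k A')) => [[A' gA]|nA].
      by exists A'; split => //; case: gA.
    by exists ptS; split; [apply: forest_pt|].
  have keyex : forall A, is_forest A -> exists k, good k A.
    move=> A FA; case: (pickP (fun _ : svert A => true)) => [a _|N].
      have [i Hi] := HS (RStruct A a) FA.
      by exists (inl i); split => //; exists a.
    by exists (inr (nullset A)); split => //; split => // x; have := N x.
  have geq : forall k A A', good k A -> good k A' -> equivO O A A'.
    case=> [i|N] A A' [FA gA] [FA' gA'].
      case: gA => a Ha; case: gA' => a' Ha'.
      by apply: (key_vertex _ _ a a' FC) => Q; rewrite Ha Ha'.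
    case: gA => nA NA; case: gA' => nA' NA'.
    by apply: equiv_iso FC (iso_empty _ _ nA nA' _); rewrite NA NA'.
  exists #|{: ('I_n + {set sig})%type}|, (fun j => Cf (enum_val j)); split.
    by move=> j; case: (Cf_spec (enum_val j)).
  move=> A FA; have [k gk] := keyex A FA; exists (enum_rank k).
  rewrite enum_rankK; apply: (geq k) => //; apply: (Cf_spec k).2; by exists A.
move=> A0 FA0.
pose S'' (T : {set 'I_n * bool}) (Q : rstruct ar) : Prop :=
  is_rforest Q /\ forall jb, jb \in T -> (S jb.1 Q <-> jb.2).
exists #|{: {set 'I_n * bool}}|, (fun j => S'' (enum_val j)) => P FP.
pose PB B := RStruct (dunion (rbase P) B) (inl (rroot P)).
pose T : {set 'I_n * bool} := [set jb : 'I_n * bool | pb (exists B, is_forest B /\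
   (forall Q, rminus O (PB B) Q <-> S jb.1 Q) /\ (uminus O A0 B <-> jb.2))].
exists (enum_rank T) => Q; rewrite enum_rankK.
have help : forall B, is_rforest Q -> is_forest B ->
    (uminus O (rbase (rglue P Q)) B <-> rminus O (PB B) Q).
  move=> B FQ FB; rewrite /uminus /rminus.
  have := Oiso FC _ _ (iso_glue_dunion P Q B); tauto.
have core : is_rforest Q -> (equivO O (rbase (rglue P Q)) A0 <->
    forall jb, jb \in T -> (S jb.1 Q <-> jb.2)).
  move=> FQ; split.
    move=> E jb; rewrite inE => /pbP[B [FB [HB HU]]].
    rewrite -HB -HU -(E B); symmetry; exact: help.
  move=> H B; case: (classic (is_forest B)) => FB; last first.
    by rewrite /uminus; tauto.
  have FPB : is_rforest (PB B) by apply: forest_dunion.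
  have [i Hi] := HS (PB B) FPB.
  have jbT : (i, pb (uminus O A0 B)) \in T.
    rewrite inE; apply/pbP; exists B; split => //; split => //=.
    by split => [?|/pbP //]; apply/pbP.
  have := H _ jbT; rewrite /= (help B FQ FB) Hi => ->; split => [/pbP //|?]; by apply/pbP.
split.
  move=> [FQ [FG E]]; split => //; exact/(core FQ).
move=> [FQ H]; split => //; split; first exact: forest_glue.
exact/(core FQ).
Qed.
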